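(* Let $h$ and $k$ be relatively prime odd integers with $k>0$. Then $$B_{1}(h,k)=\frac{2h}{\pi}\sum_{\substack{n=1\\ 2n-1\not\equiv 0 \pmod{k}}}^{\infty}\frac{1}{2n-1}\tan\left(\frac{\pi h(2n-1)}{2k}\right)+\frac{1}{2k}-\frac{1}{2}.$$
   Context: $[x]$ denotes the greatest integer $\le x$. For integers $h,k$ with $k>0$ and $\gcd(h,k)=1$, $$B_{1}(h,k)=\sum_{j=1}^{k-1}(-1)^{j+\left[\frac{hj}{k}\right]}\left[\frac{hj}{k}\right].$$ *)

(* Defs.v *)
From Stdlib Require Import Reals ZArith List Lra Lia.
From Coquelicot Require Import Coquelicot.
Open Scope R_scope.

Definition sgnpow (e : Z) : Z := if Z.even e then 1%Z else (-1)%Z.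

(* B_1(h,k) = sum_{j=1}^{k-1} (-1)^(j + [hj/k]) [hj/k];
   for k > 0, Z.div (h*j) k is the floor of hj/k. *)
Definition B_1 (h k : Z) : Z :=
  fold_right Z.add 0%Z
    (map (fun n : nat =>
            let j := Z.of_nat n in
            let q := Z.div (h * j) k in
            (sgnpow (j + q) * q)%Z)
         (seq 1 (Z.to_nat k - 1))).

(* The n-th term (n >= 1 shifted to index n-1 = m) of the series
   sum_{n>=1, 2n-1 not= 0 mod k} tan(pi h (2n-1)/(2k)) / (2n-1);
   excluded indices contribute 0, so partial sums are those of the
   restricted series taken in increasing order of n. *)
Definition tan_term (h k : Z) (m : nat) : R :=
  let o := (2 * Z.of_nat m + 1)%Z in
  if Z.eqb (Z.modulo o k) 0 then 0
  else tan (PI * IZR h * IZR o / (2 * IZR k)) / IZR o.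

(* Main.v *)
Require Import Defs.
From Stdlib Require Import Reals ZArith.
From Coquelicot Require Import Coquelicot.
From Stdlib Require Import Lra Lia List Permutation.
Open Scope R_scope.

Lemma cos_nPI (n:nat) : cos (INR n * PI) = (-1)^n.
Proof.
  induction n.
  - simpl. rewrite Rmult_0_l, cos_0. ring.
  - rewrite S_INR, Rmult_plus_distr_r, Rmult_1_l, neg_cos, IHn. simpl. ring.
Qed.

Definition Pn (N:nat) (t:R) := sum_n (fun n => sin ((2*INR n+1)*t)/(2*INR n+1)) N.
Definition Dn (N:nat) (t:R) := sum_n (fun n => cos ((2*INR n+1)*t)) N.

Lemma Dn_closed N t : 2 * sin t * Dn N t = sin (2*(INR N+1)*t).
Proof.
  induction N.
  - unfold Dn; rewrite sum_O. simpl (INR 0). replace ((2*0+1)*t) with t by ring.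
    replace (2*(0+1)*t) with (2*t) by ring. rewrite sin_2a; ring.
  - unfold Dn in *; rewrite sum_Sn.
    assert (Hu : INR (S N) = INR N + 1) by apply S_INR.
    set (u := INR (S N)) in *. unfold plus; simpl.
    rewrite Rmult_plus_distr_l, IHN.
    replace (2*(INR N+1)*t) with ((2*u+1)*t - t) by (rewrite Hu; ring).
    replace (2*(u+1)*t) with ((2*u+1)*t + t) by ring.
    rewrite sin_plus, sin_minus. ring.
Qed.

Lemma term_deriv n t : is_derive (fun t => sin ((2*INR n+1)*t)/(2*INR n+1)) t (cos ((2*INR n+1)*t)).
Proof.
  assert (0 <= INR n) by apply pos_INR.
  auto_derive; [auto|]. field. lra.
Qed.

Lemma Pn_deriv N t : is_derive (Pn N) t (Dn N t).
Proof.
  induction N.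
  - unfold Pn, Dn. rewrite sum_O.
    apply is_derive_ext with (f := fun t => sin ((2*INR 0+1)*t)/(2*INR 0+1)).
    + intro; rewrite sum_O; reflexivity.
    + apply term_deriv.
  - unfold Dn; rewrite sum_Sn.
    apply is_derive_ext with (f := fun t => Pn N t + sin ((2*INR (S N)+1)*t)/(2*INR (S N)+1)).
    + intro; unfold Pn; rewrite sum_Sn; reflexivity.
    + apply (is_derive_plus (Pn N) (fun t => sin ((2*INR (S N)+1)*t)/(2*INR (S N)+1))).
      * exact IHN.
      * apply term_deriv.
Qed.

Definition Gf (M t : R) := - cos (2*M*t) / (4*M*sin t).

Lemma H_deriv N t : sin t <> 0 ->
  is_derive (fun t => Pn N t - Gf (INR N+1) t) t
    (- cos (2*(INR N+1)*t) * cos t / (4*(INR N+1)*(sin t)^2)).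
Proof.
  intro Hs. assert (0 <= INR N) by apply pos_INR.
  assert (HG : is_derive (Gf (INR N+1)) t
     (sin (2*(INR N+1)*t)/(2*sin t) + cos (2*(INR N+1)*t) * cos t / (4*(INR N+1)*(sin t)^2))).
  { unfold Gf. auto_derive. { intro; apply Hs. nra. } field. lra. }
  assert (Hm := is_derive_minus _ _ _ _ _ (Pn_deriv N t) HG).
  replace (- cos (2*(INR N+1)*t) * cos t / (4*(INR N+1)*(sin t)^2)) with
    (Dn N t - (sin (2*(INR N+1)*t)/(2*sin t) + cos (2*(INR N+1)*t) * cos t / (4*(INR N+1)*(sin t)^2))).
  - exact Hm.
  - rewrite <- (Dn_closed N t). field. lra.
Qed.

Lemma sin_between y t : 0<y<PI -> Rmin y (PI/2) <= t <= Rmax y (PI/2) -> Rmin (sin y) 1 <= sin t.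
Proof.
  intros Hy Ht. assert (HP := PI_RGT_0).
  destruct (Rle_dec y (PI/2)) as [Hl|Hl].
  - rewrite Rmin_left in Ht by lra. rewrite Rmax_right in Ht by lra.
    apply Rle_trans with (sin y). apply Rmin_l.
    apply sin_incr_1; lra.
  - rewrite Rmin_right in Ht by lra. rewrite Rmax_left in Ht by lra.
    apply Rle_trans with (sin y). apply Rmin_l.
    apply sin_decr_1; lra.
Qed.

Lemma abs_div_le a b d : Rabs a <= 1 -> 0 < d <= b -> Rabs (a/b) <= 1/d.
Proof.
  intros Ha Hd. unfold Rdiv. rewrite Rabs_mult, Rabs_inv, (Rabs_pos_eq b) by lra.
  apply Rmult_le_compat.
  - apply Rabs_pos.
  - left; apply Rinv_0_lt_compat; lra.
  - exact Ha.
  - apply Rinv_le_contravar; lra.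
Qed.

Lemma Rabs_cos_le u : Rabs (cos u) <= 1.
Proof. apply Rabs_le. apply COS_bound. Qed.

Lemma key_bound y N : 0 < y < PI ->
  Rabs (Pn N y - Pn N (PI/2)) <=
   (Rabs (PI/2 - y) / (4 * (Rmin (sin y) 1)^2) + 1 / (2 * Rmin (sin y) 1)) / (INR N + 1).
Proof.
  intros Hy. assert (HP := PI_RGT_0).
  set (m0 := Rmin (sin y) 1).
  assert (Hm0 : 0 < m0).
  { unfold m0, Rmin. destruct (Rle_dec (sin y) 1). apply sin_gt_0; lra. lra. }
  assert (HN : 0 <= INR N) by apply pos_INR.
  set (M := INR N + 1). assert (HM : 0 < M) by (unfold M; lra).
  set (H := fun t => Pn N t - Gf M t).
  assert (Hsin : forall t, Rmin y (PI/2) <= t <= Rmax y (PI/2) -> m0 <= sin t)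
    by (intros; apply sin_between; auto).
  destruct (MVT_gen H y (PI/2) (fun t => - cos (2*M*t) * cos t / (4*M*(sin t)^2))) as [c [Hc Heq]].
  - intros x Hx. apply H_deriv. assert (m0 <= sin x) by (apply Hsin; lra). lra.
  - intros x Hx. apply continuity_pt_filterlim. apply (ex_derive_continuous H).
    eexists. apply H_deriv. assert (m0 <= sin x) by (apply Hsin; lra). lra.
  - assert (Hsc := Hsin c Hc).
    assert (Hsy : m0 <= sin y) by (apply Hsin; split; [apply Rmin_l| apply Rmax_l]).
    assert (Hsp : m0 <= sin (PI/2)) by (apply Hsin; split; [apply Rmin_r| apply Rmax_r]).
    assert (B1 : Rabs (- cos (2*M*c) * cos c / (4*M*(sin c)^2)) <= 1/(4*M*m0^2)).
    { apply abs_div_le.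
      - rewrite Rabs_mult, Rabs_Ropp. assert (H1 := Rabs_cos_le (2*M*c)).
        assert (H2 := Rabs_cos_le c). assert (H3 := Rabs_pos (cos c)).
        assert (H4 := Rabs_pos (cos (2*M*c))). nra.
      - split. apply Rmult_lt_0_compat. lra. apply pow_lt; lra.
        apply Rmult_le_compat_l. lra. apply pow_incr; lra. }
    assert (BG : forall t, m0 <= sin t -> Rabs (Gf M t) <= 1/(4*M*m0)).
    { intros t Ht. unfold Gf. apply abs_div_le.
      - rewrite Rabs_Ropp; apply Rabs_cos_le.
      - split. apply Rmult_lt_0_compat; lra. apply Rmult_le_compat_l; lra. }
    assert (E : Pn N y - Pn N (PI/2) = - (H (PI/2) - H y) + (Gf M y - Gf M (PI/2)))
      by (unfold H; ring).
    rewrite E, Heq.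
    eapply Rle_trans. apply Rabs_triang.
    eapply Rle_trans. apply Rplus_le_compat.
    + rewrite Rabs_Ropp, Rabs_mult. apply Rmult_le_compat_r. apply Rabs_pos. exact B1.
    + eapply Rle_trans. apply Rabs_triang. rewrite Rabs_Ropp.
      apply Rplus_le_compat; apply BG; assumption.
    + apply Req_le. unfold M. field. split; lra.
Qed.

Lemma leibniz : is_lim_seq (fun N => Pn N (PI/2)) (PI/4).
Proof.
  assert (HL : Un_cv (fun N => sum_f_R0 (tg_alt PI_tg) N) (PI/4)).
  { rewrite <- Alt_PI_eq. unfold Alt_PI. destruct exist_PI as [l Hl].
    replace (4*l/4) with l by field. exact Hl. }
  apply is_lim_seq_Reals in HL.
  eapply is_lim_seq_ext. 2: exact HL.
  intro N. unfold Pn. rewrite <- sum_n_Reals. apply sum_n_ext. intro n.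
  unfold tg_alt, PI_tg.
  replace (INR (2*n+1)) with (2*INR n+1) by (rewrite plus_INR, mult_INR; simpl; ring).
  replace ((2*INR n+1)*(PI/2)) with (PI/2 + INR n * PI) by field.
  rewrite <- cos_sin, cos_nPI. reflexivity.
Qed.

Lemma lim_C_over (C : R) : is_lim_seq (fun N => C / (INR N + 1)) 0.
Proof.
  assert (H1 : is_lim_seq (fun n => / INR n) 0).
  { replace (Finite 0) with (Rbar_inv p_infty) by reflexivity.
    apply is_lim_seq_inv. apply is_lim_seq_INR. discriminate. }
  apply is_lim_seq_incr_1 in H1.
  apply (is_lim_seq_scal_l _ C) in H1.
  replace (Rbar_mult C 0) with (Finite 0) in H1 by (simpl; f_equal; ring).
  eapply is_lim_seq_ext. 2: exact H1. intro n. cbv beta. rewrite S_INR. reflexivity.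
Qed.

Lemma core_series y : 0 < y < PI ->
  is_series (fun n => sin ((2*INR n+1)*y)/(2*INR n+1)) (PI/4).
Proof.
  intro Hy.
  set (C := Rabs (PI/2 - y) / (4 * (Rmin (sin y) 1)^2) + 1 / (2 * Rmin (sin y) 1)).
  assert (H0 : is_lim_seq (fun N => Pn N y - Pn N (PI/2)) 0).
  { apply is_lim_seq_le_le with (u := fun N => - (C / (INR N + 1))) (w := fun N => C / (INR N + 1)).
    - intro N. apply Rabs_le_between. apply key_bound. exact Hy.
    - assert (Ho := proj1 (is_lim_seq_opp _ _) (lim_C_over C)). simpl in Ho. rewrite Ropp_0 in Ho. exact Ho.
    - apply lim_C_over. }
  assert (H2 := is_lim_seq_plus' _ _ _ _ leibniz H0).
  rewrite Rplus_0_r in H2.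
  apply (is_lim_seq_ext _ (fun N => Pn N y)) in H2. 2: { intro; ring. }
  exact H2.
Qed.


Lemma sgnpow_add a b : sgnpow (a + b) = (sgnpow a * sgnpow b)%Z.
Proof. unfold sgnpow. rewrite Z.even_add. destruct (Z.even a), (Z.even b); reflexivity. Qed.

Lemma sgnpow_par a b : Z.even a = Z.even b -> sgnpow a = sgnpow b.
Proof. unfold sgnpow. intro H; rewrite H; reflexivity. Qed.

Lemma cos_ZPI z : cos (IZR z * PI) = IZR (sgnpow z).
Proof.
  induction z using Z.peano_ind.
  - rewrite Rmult_0_l, cos_0. reflexivity.
  - rewrite <- Z.add_1_r, plus_IZR, Rmult_plus_distr_r, Rmult_1_l, neg_cos, IHz.
    rewrite sgnpow_add, mult_IZR. change (sgnpow 1) with (-1)%Z. lra.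
  - assert (E : z = (Z.pred z + 1)%Z) by lia.
    rewrite E in IHz. rewrite sgnpow_add, mult_IZR, plus_IZR in IHz.
    rewrite Rmult_plus_distr_r, Rmult_1_l, neg_cos in IHz. change (sgnpow 1) with (-1)%Z in IHz.
    lra.
Qed.

Lemma sin_shift_ZPI a z : sin (a + IZR z * PI) = IZR (sgnpow z) * sin a.
Proof.
  rewrite sin_plus, cos_ZPI, (sin_eq_0_1 (IZR z * PI)) by (exists z; reflexivity). ring.
Qed.


Lemma IZR_odd n : IZR (2 * Z.of_nat n + 1) = 2 * INR n + 1.
Proof. rewrite plus_IZR, mult_IZR, <- INR_IZR_INZ. reflexivity. Qed.

Lemma even_odd_mul n q : Z.even ((2 * Z.of_nat n + 1) * q) = Z.even q.
Proof. rewrite Z.even_mul, Z.even_add, Z.even_mul. reflexivity. Qed.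

Lemma inner_series k M : (0 < k)%Z -> (M mod k <> 0)%Z ->
  is_series (fun n => sin (PI * IZR M * IZR (2*Z.of_nat n+1) / IZR k) / IZR (2*Z.of_nat n+1))
    (IZR (sgnpow (M / k)) * (PI/4)).
Proof.
  intros Hk Hr.
  set (q := (M / k)%Z). set (r := (M mod k)%Z).
  assert (HM : M = (k * q + r)%Z) by (apply Z_div_mod_eq_full).
  assert (Hb := Z.mod_pos_bound M k Hk). fold r in Hb.
  assert (Hr0 : (0 < r)%Z) by lia.
  assert (Hkr : 0 < IZR k) by (apply IZR_lt; exact Hk).
  assert (Hrr : 0 < IZR r) by (apply IZR_lt; exact Hr0).
  assert (Hrk : IZR r < IZR k) by (apply IZR_lt; lia).
  assert (HP := PI_RGT_0).
  assert (Hy : 0 < PI * IZR r / IZR k < PI).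
  { split. apply Rdiv_lt_0_compat; [apply Rmult_lt_0_compat|]; lra.
    apply Rmult_lt_reg_r with (IZR k); [lra|]. unfold Rdiv. rewrite Rmult_assoc, Rinv_l by lra.
    rewrite Rmult_1_r. apply Rmult_lt_compat_l; lra. }
  assert (Hc := is_series_scal_l (IZR (sgnpow q)) _ _ (core_series _ Hy)).
  eapply is_series_ext. 2: exact Hc.
  intro n. cbv beta.
  rewrite IZR_odd.
  replace (PI * IZR M * (2 * INR n + 1) / IZR k) with
     ((2 * INR n + 1) * (PI * IZR r / IZR k) + IZR ((2 * Z.of_nat n + 1) * q) * PI).
  2: { rewrite HM, mult_IZR, IZR_odd, plus_IZR, mult_IZR. field. lra. }
  rewrite sin_shift_ZPI.
  rewrite (sgnpow_par ((2 * Z.of_nat n + 1) * q) q) by apply even_odd_mul.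
  unfold scal; simpl; unfold mult; simpl. unfold Rdiv. symmetry; apply Rmult_assoc.
Qed.

Definition sumR (F : nat -> R) (n : nat) := fold_right Rplus 0 (map F (seq 1 n)).

Lemma fold_Rplus_shift (l : list R) a : fold_right Rplus a l = fold_right Rplus 0 l + a.
Proof. induction l; simpl. lra. rewrite IHl. lra. Qed.

Lemma sumR_S F n : sumR F (S n) = sumR F n + F (S n).
Proof.
  unfold sumR. rewrite seq_S, map_app, fold_right_app. simpl.
  rewrite fold_Rplus_shift. f_equal. lra.
Qed.

Definition Af (m : nat) (x : R) := sumR (fun j => (-1)^j * INR j * sin (2 * INR j * x)) m.

Lemma Af_closed m x : 4 * (cos x)^2 * Af m x =
  (-1)^m * (sin (2*INR m*x) + 2*INR m*cos x*sin((2*INR m+1)*x)).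
Proof.
  induction m.
  - unfold Af, sumR. simpl. replace (2*0*x) with 0 by lra. rewrite sin_0. field.
  - unfold Af in *. rewrite sumR_S, Rmult_plus_distr_l, IHm. rewrite S_INR.
    set (c := cos x).
    assert (hU : sin (2*INR m*x) = 2*c*sin((2*INR m+1)*x) - sin(2*(INR m + 1)*x)).
    { replace (2*INR m*x) with ((2*INR m+1)*x - x) by field.
      replace (2*(INR m+1)*x) with ((2*INR m+1)*x + x) by field.
      rewrite sin_plus, sin_minus. unfold c. field. }
    assert (hQ : sin((2*(INR m+1)+1)*x) = 2*c*sin(2*(INR m+1)*x) - sin((2*INR m+1)*x)).
    { replace ((2*(INR m+1)+1)*x) with (2*(INR m+1)*x + x) by field.
      replace ((2*INR m+1)*x) with (2*(INR m+1)*x - x) by field.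
      rewrite sin_plus, sin_minus. unfold c. field. }
    rewrite hU, hQ. change ((-1)^(S m)) with (-1 * (-1)^m).
    set (s := (-1)^m). set (T := sin (2 * (INR m + 1) * x)). set (P := sin ((2 * INR m + 1) * x)).
    field.
Qed.

Lemma tan_fourier t x : cos (2 * INR (2*t+1) * x) = -1 -> cos x <> 0 ->
  tan x = 2 / INR (2*t+1) * Af (2*t) x.
Proof.
  intros Hc Hx.
  set (K := INR (2*t+1)) in *.
  assert (HK : K = INR (2*t) + 1) by (unfold K; rewrite plus_INR; reflexivity).
  assert (HK0 : 0 < K) by (rewrite HK; assert (0 <= INR (2*t)) by apply pos_INR; lra).
  assert (Hs : sin (2*K*x) = 0).
  { assert (H := sin2_cos2 (2*K*x)). rewrite Hc in H. unfold Rsqr in H. nra. }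
  assert (H := Af_closed (2*t) x).
  rewrite pow_1_even in H.
  replace (2 * INR (2*t) * x) with (2*K*x - 2*x) in H by (rewrite HK; field).
  replace ((2 * INR (2*t) + 1) * x) with (2*K*x - x) in H by (rewrite HK; field).
  rewrite sin_minus, sin_minus, Hs, Hc, sin_2a in H.
  unfold tan.
  apply Rmult_eq_reg_l with (4 * (cos x)^2 * K). 2: { apply Rmult_integral_contrapositive; split; [|lra]. apply Rmult_integral_contrapositive; split. lra. apply pow_nonzero. exact Hx. }
  replace (4 * (cos x)^2 * K * (2 / K * Af (2*t) x)) with (2 * (4 * cos x ^ 2 * Af (2 * t) x)) by (field; lra).
  rewrite H. replace (INR (2*t)) with (K - 1) by lra. field. exact Hx.
Qed.

Section ZPart.
Local Open Scope Z_scope.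

Definition sumZ (F : nat -> Z) (n : nat) := fold_right Z.add 0 (map F (seq 1 n)).

Lemma fold_Zplus_shift (l : list Z) a : fold_right Z.add a l = fold_right Z.add 0 l + a.
Proof. induction l; simpl. lia. rewrite IHl. lia. Qed.

Lemma sumZ_S F n : sumZ F (S n) = sumZ F n + F (S n).
Proof.
  unfold sumZ. rewrite seq_S, map_app, fold_right_app. simpl.
  rewrite fold_Zplus_shift. f_equal. lia.
Qed.

Lemma sumZ_ext F G n : (forall j, (1 <= j <= n)%nat -> F j = G j) -> sumZ F n = sumZ G n.
Proof.
  induction n; intros H. reflexivity.
  rewrite !sumZ_S, IHn, H. reflexivity. lia. intros; apply H; lia.
Qed.

Lemma sumZ_lin F G a b n : sumZ (fun j => a * F j + b * G j) n = a * sumZ F n + b * sumZ G n.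
Proof. induction n. unfold sumZ; simpl; ring. rewrite !sumZ_S, IHn. ring. Qed.

Lemma fold_perm (l l' : list Z) : Permutation l l' -> fold_right Z.add 0 l = fold_right Z.add 0 l'.
Proof. induction 1; simpl; lia. Qed.

Lemma sgnpow_2 z : sgnpow (2 * z) = 1.
Proof. unfold sgnpow. rewrite Z.even_mul. reflexivity. Qed.
Lemma sgnpow_2_1 z : sgnpow (2 * z + 1) = -1.
Proof. unfold sgnpow. rewrite Z.even_add, Z.even_mul. reflexivity. Qed.

Lemma alt_sum t : sumZ (fun r => sgnpow (Z.of_nat r) * Z.of_nat r) (2 * t) = Z.of_nat t.
Proof.
  induction t. reflexivity.
  replace (2 * S t)%nat with (S (S (2 * t))) by lia.
  rewrite !sumZ_S, IHt.
  replace (Z.of_nat (S (2*t))) with (2 * Z.of_nat t + 1) by lia.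
  replace (Z.of_nat (S (S (2*t)))) with (2 * (Z.of_nat t + 1)) by lia.
  rewrite sgnpow_2, sgnpow_2_1. lia.
Qed.

End ZPart.
Section Perm.
Local Open Scope Z_scope.
Variables h k : Z.
Variable t : nat.
Hypothesis Hk : k = Z.of_nat (2 * t + 1).
Hypothesis Hg : Z.gcd h k = 1.

Definition rho (j : nat) : nat := Z.to_nat ((h * Z.of_nat j) mod k).

Lemma mod_nonzero j : (1 <= j <= 2 * t)%nat -> (h * Z.of_nat j) mod k <> 0.
Proof.
  intros Hj H0. apply Z.mod_divide in H0; [|lia].
  apply Z.gauss in H0. 2: { rewrite Z.gcd_comm; exact Hg. }
  destruct H0 as [z Hz]. destruct (Z_le_gt_dec z 0); nia.
Qed.

Lemma rho_perm : Permutation (map rho (seq 1 (2 * t))) (seq 1 (2 * t)).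
Proof.
  apply Permutation_map_same_l.
  - apply FinFun.Injective_map_NoDup_in. 2: apply seq_NoDup.
    intros a b Ha Hb Hab. apply in_seq in Ha, Hb. unfold rho in Hab.
    assert (Hka : 0 <= (h * Z.of_nat a) mod k < k) by (apply Z.mod_pos_bound; lia).
    assert (Hkb : 0 <= (h * Z.of_nat b) mod k < k) by (apply Z.mod_pos_bound; lia).
    apply Z2Nat.inj in Hab; try lia.
    assert (Hd : (h * (Z.of_nat a - Z.of_nat b)) mod k = 0).
    { rewrite Z.mul_sub_distr_l, Zminus_mod, Hab, Z.sub_diag. reflexivity. }
    apply Z.mod_divide in Hd; [|lia].
    apply Z.gauss in Hd. 2: { rewrite Z.gcd_comm; exact Hg. }
    destruct Hd as [z Hz]. destruct (Z_le_gt_dec z 0); [destruct (Z_le_gt_dec z (-1))|]; nia.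
  - intros x Hx. apply in_map_iff in Hx. destruct Hx as [j [Hj Hin]].
    subst x. apply in_seq in Hin. apply in_seq.
    assert (Hka : 0 <= (h * Z.of_nat j) mod k < k) by (apply Z.mod_pos_bound; lia).
    assert (Hnz := mod_nonzero j ltac:(lia)). unfold rho. lia.
Qed.

Lemma rho_sum : sumZ (fun j => sgnpow ((h * Z.of_nat j) mod k) * ((h * Z.of_nat j) mod k)) (2 * t) = Z.of_nat t.
Proof.
  rewrite <- alt_sum. unfold sumZ.
  rewrite <- (fold_perm _ _ (Permutation_map (fun r => sgnpow (Z.of_nat r) * Z.of_nat r) rho_perm)).
  rewrite map_map. f_equal. apply map_ext_in. intros j Hj. apply in_seq in Hj.
  assert (Hka : 0 <= (h * Z.of_nat j) mod k < k) by (apply Z.mod_pos_bound; lia).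
  unfold rho. rewrite Z2Nat.id by lia. reflexivity.
Qed.
End Perm.
Section ZPart2.
Local Open Scope Z_scope.

Lemma sgnpow_add' a b : sgnpow (a + b) = sgnpow a * sgnpow b.
Proof. unfold sgnpow. rewrite Z.even_add. destruct (Z.even a), (Z.even b); reflexivity. Qed.

Lemma pointwise h k (j : nat) : 0 < k -> Z.odd h = true -> Z.odd k = true ->
  2 * k * (sgnpow (Z.of_nat j + h * Z.of_nat j / k) * (h * Z.of_nat j / k))
  - 2 * h * (sgnpow (Z.of_nat j) * Z.of_nat j * sgnpow (h * Z.of_nat j / k))
  = -2 * (sgnpow ((h * Z.of_nat j) mod k) * ((h * Z.of_nat j) mod k)).
Proof.
  intros Hk Hh Hk2.
  set (J := Z.of_nat j). set (q := h * J / k). set (r := (h * J) mod k).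
  assert (E : h * J = k * q + r) by apply Z_div_mod_eq_full.
  assert (Hpar : sgnpow (J + q) = sgnpow r).
  { destruct (proj1 (Z.odd_spec h) Hh) as [a Ha].
    destruct (proj1 (Z.odd_spec k) Hk2) as [b Hb].
    assert (E2 : J + q = r + 2 * (q + b * q - a * J)) by (subst h k; nia).
    unfold sgnpow. rewrite E2, Z.even_add, Z.even_mul. simpl.
    destruct (Z.even r); reflexivity. }
  assert (Hs := sgnpow_add' J q).
  replace (sgnpow J * J * sgnpow q) with (sgnpow (J + q) * J) by (rewrite Hs; ring).
  rewrite Hpar. set (S := sgnpow r). clearbody S. assert (Er : r = h*J - k*q) by lia. rewrite Er. ring.
Qed.
End ZPart2.

Lemma sumR_ext F G n : (forall j, (1 <= j <= n)%nat -> F j = G j) -> sumR F n = sumR G n.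
Proof.
  induction n; intros H. reflexivity.
  rewrite !sumR_S, IHn, H. reflexivity. lia. intros; apply H; lia.
Qed.

Lemma sumR_scal_l a F n : sumR (fun j => a * F j) n = a * sumR F n.
Proof. induction n. unfold sumR; simpl; lra. rewrite !sumR_S, IHn. lra. Qed.

Lemma sumR_zero n : sumR (fun _ => 0) n = 0.
Proof. induction n. reflexivity. rewrite sumR_S, IHn. lra. Qed.

Lemma IZR_sumZ F n : IZR (sumZ F n) = sumR (fun j => IZR (F j)) n.
Proof. induction n. reflexivity. rewrite sumZ_S, sumR_S, plus_IZR, IHn. reflexivity. Qed.

Lemma pow_m1_sgnpow j : (-1)^j = IZR (sgnpow (Z.of_nat j)).
Proof.
  induction j. reflexivity.
  rewrite Nat2Z.inj_succ, <- Z.add_1_r, sgnpow_add, mult_IZR, <- IHj.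
  change (sgnpow 1) with (-1)%Z. simpl. lra.
Qed.

Lemma is_series_zero : is_series (fun _ : nat => 0) 0.
Proof.
  assert (H : forall N, sum_n (fun _ : nat => 0) N = 0).
  { induction N. rewrite sum_O; reflexivity. rewrite sum_Sn, IHN. unfold plus; simpl; lra. }
  assert (H2 : is_lim_seq (sum_n (fun _ : nat => 0)) 0).
  { apply (is_lim_seq_ext (fun _ => 0)). intro; rewrite H; reflexivity.
    apply is_lim_seq_const. }
  exact H2.
Qed.

Lemma is_series_sumR (f : nat -> nat -> R) (v : nat -> R) n :
  (forall j, (1 <= j <= n)%nat -> is_series (f j) (v j)) ->
  is_series (fun m => sumR (fun j => f j m) n) (sumR v n).
Proof.
  induction n; intros H.
  - apply is_series_zero.
  - assert (H1 := is_series_plus _ _ _ _ (IHn (fun j Hj => H j ltac:(lia))) (H (S n) ltac:(lia))).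
    eapply is_series_ext. 2: { rewrite sumR_S. exact H1. }
    intro m. rewrite sumR_S. reflexivity.
Qed.

Lemma term_identity h k t n :
  k = Z.of_nat (2 * t + 1) -> Z.gcd h k = 1%Z -> Z.odd h = true ->
  tan_term h k n = 2 / IZR k *
    sumR (fun j => (-1)^j * INR j *
      (sin (PI * IZR (h * Z.of_nat j) * IZR (2 * Z.of_nat n + 1) / IZR k) / IZR (2 * Z.of_nat n + 1))) (2 * t).
Proof.
  intros Hkt Hg Hh.
  assert (Hk : (0 < k)%Z) by lia.
  assert (Hkr : 0 < IZR k) by (apply IZR_lt; exact Hk).
  assert (HP := PI_RGT_0).
  assert (Ho : 0 < IZR (2 * Z.of_nat n + 1)) by (rewrite IZR_odd; assert (0 <= INR n) by apply pos_INR; lra).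
  unfold tan_term. cbv zeta.
  set (o := (2 * Z.of_nat n + 1)%Z) in *.
  destruct (Z.eqb_spec (o mod k) 0) as [H0|H0].
  - rewrite (sumR_ext _ (fun _ => 0)). rewrite sumR_zero. lra.
    intros j Hj.
    assert (Eo : o = (k * (o / k))%Z) by (rewrite (Z_div_mod_eq_full o k) at 1; rewrite H0; ring).
    replace (PI * IZR (h * Z.of_nat j) * IZR o / IZR k) with (IZR (h * Z.of_nat j * (o / k)) * PI).
    + rewrite sin_eq_0_1 by (eexists; reflexivity). unfold Rdiv. rewrite Rmult_0_l. lra.
    + rewrite Eo at 2. rewrite !mult_IZR. field. lra.
  - set (x := PI * IZR h * IZR o / (2 * IZR k)).
    assert (HK : INR (2 * t + 1) = IZR k) by (rewrite Hkt, INR_IZR_INZ; reflexivity).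
    assert (Hc : cos (2 * INR (2 * t + 1) * x) = -1).
    { rewrite HK. replace (2 * IZR k * x) with (IZR (h * o) * PI) by (unfold x; rewrite mult_IZR; field; lra).
      rewrite cos_ZPI. unfold sgnpow. rewrite Z.even_mul, <- Z.negb_odd, Hh.
      unfold o. rewrite Z.even_add, Z.even_mul. reflexivity. }
    assert (Hx : cos x <> 0).
    { intro Hc0. apply cos_eq_0_0 in Hc0. destruct Hc0 as [z Hz].
      assert (E : IZR (h * o) = IZR (k * (2 * z + 1))).
      { rewrite !mult_IZR, plus_IZR, mult_IZR.
        replace (IZR h * IZR o) with (x * (2 * IZR k / PI)) by (unfold x; field; lra).
        rewrite Hz. field. lra. }
      apply eq_IZR in E.
      assert (Hd : (k | h * o)%Z) by (exists (2 * z + 1)%Z; lia).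
      apply Z.gauss in Hd. 2: { rewrite Z.gcd_comm; exact Hg. }
      apply H0. apply Z.mod_divide; [lia | exact Hd]. }
    rewrite (tan_fourier t x Hc Hx), HK. unfold Af.
    unfold Rdiv at 1. rewrite Rmult_assoc. f_equal.
    rewrite Rmult_comm, <- sumR_scal_l. apply sumR_ext. intros j Hj.
    replace (PI * IZR (h * Z.of_nat j) * IZR o / IZR k) with (2 * INR j * x)
      by (unfold x; rewrite mult_IZR, <- INR_IZR_INZ; field; lra).
    field. lra.
Qed.

Theorem theorem22 (h k : Z) :
  (0 < k)%Z -> Z.gcd h k = 1%Z -> Z.odd h = true -> Z.odd k = true ->
  ex_series (tan_term h k) /\
  IZR (B_1 h k) =
    2 * IZR h / PI * Series (tan_term h k) + 1 / (2 * IZR k) - 1 / 2.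
Proof.
  intros Hk Hg Hh Hk2.
  destruct (proj1 (Z.odd_spec k) Hk2) as [b Hb].
  set (t := Z.to_nat b).
  assert (Hkt : k = Z.of_nat (2 * t + 1)) by (unfold t; lia).
  assert (Hkr : 0 < IZR k) by (apply IZR_lt; exact Hk).
  assert (HP := PI_RGT_0).
  set (v := fun j : nat => (-1)^j * INR j * (IZR (sgnpow (h * Z.of_nat j / k)) * (PI / 4))).
  assert (Hser : is_series (tan_term h k) (2 / IZR k * sumR v (2 * t))).
  { assert (H1 : is_series (fun m => sumR (fun j => (-1)^j * INR j *
      (sin (PI * IZR (h * Z.of_nat j) * IZR (2 * Z.of_nat m + 1) / IZR k) / IZR (2 * Z.of_nat m + 1))) (2 * t))
      (sumR v (2 * t))).
    { apply (is_series_sumR (fun j m => (-1)^j * INR j *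
      (sin (PI * IZR (h * Z.of_nat j) * IZR (2 * Z.of_nat m + 1) / IZR k) / IZR (2 * Z.of_nat m + 1))) v).
      intros j Hj.
      assert (H2 := is_series_scal_l ((-1)^j * INR j) _ _
         (inner_series k (h * Z.of_nat j) Hk (mod_nonzero h k t Hkt Hg j Hj))).
      exact H2. }
    assert (H3 := is_series_scal_l (2 / IZR k) _ _ H1).
    eapply is_series_ext. 2: exact H3.
    intro n. simpl. symmetry. apply (term_identity h k t n Hkt Hg Hh). }
  split. { eexists; exact Hser. }
  rewrite (is_series_unique _ _ Hser).
  set (W := fun j : nat => (sgnpow (Z.of_nat j) * Z.of_nat j * sgnpow (h * Z.of_nat j / k))%Z).
  assert (Hv : sumR v (2 * t) = PI / 4 * IZR (sumZ W (2 * t))).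
  { rewrite IZR_sumZ, <- sumR_scal_l. apply sumR_ext. intros j _.
    unfold v, W. rewrite !mult_IZR, <- pow_m1_sgnpow, <- INR_IZR_INZ. lra. }
  set (Bt := fun n : nat => (sgnpow (Z.of_nat n + h * Z.of_nat n / k) * (h * Z.of_nat n / k))%Z).
  assert (HB : B_1 h k = sumZ Bt (2 * t)).
  { unfold B_1, sumZ, Bt. replace (Z.to_nat k - 1)%nat with (2 * t)%nat by lia. reflexivity. }
  assert (HZ : (2 * k * sumZ Bt (2 * t) + (-2 * h) * sumZ W (2 * t) = 1 - k)%Z).
  { rewrite <- sumZ_lin.
    rewrite (sumZ_ext _ (fun j => -2 * (sgnpow ((h * Z.of_nat j) mod k) * ((h * Z.of_nat j) mod k)) + 0 * 0)%Z).
    - rewrite sumZ_lin. change (sumZ (fun _ => 0%Z) (2*t)) with (sumZ (fun _ => 0%Z) (2*t)).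
      rewrite (rho_sum h k t Hkt Hg). lia.
    - intros j _. unfold Bt, W. rewrite <- (pointwise h k j Hk Hh Hk2). ring. }
  rewrite HB, Hv.
  apply (f_equal IZR) in HZ. rewrite !plus_IZR, !mult_IZR, minus_IZR in HZ.
  set (SB := IZR (sumZ Bt (2 * t))) in *. set (SW := IZR (sumZ W (2 * t))) in *.
  apply Rmult_eq_reg_l with (2 * IZR k). 2: lra.
  replace (2 * IZR k * (2 * IZR h / PI * (2 / IZR k * (PI / 4 * SW)) + 1 / (2 * IZR k) - 1 / 2))
    with (2 * IZR h * SW + 1 - IZR k) by (field; lra).
  lra.
Qed.
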